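(* Let $\mathcal A,\mathcal B$ be finite alphabets, let $\sigma:\mathcal A^*\to\mathcal B^*$ be a non-erasing monoid morphism, and let $X\subseteq\mathcal A^{\mathbb Z}$ be a subshift. Write $\sigma=\alpha_\sigma\circ\pi_\sigma$ with $\pi_\sigma:\mathcal A^*\to\mathcal A_\sigma^*$ the subdivision morphism and $\alpha_\sigma:\mathcal A_\sigma^*\to\mathcal B^*$ the associated letter-to-letter morphism, and let $\alpha^X_\sigma:\pi_\sigma(X)\to\sigma(X)$ be the restriction/co-restriction of $\alpha_\sigma^{\mathbb Z}:\mathcal A_\sigma^{\mathbb Z}\to\mathcal B^{\mathbb Z}$. Then the following are equivalent: (1) $\sigma$ is recognizable in $X$; (2) $\alpha^X_\sigma$ is an isomorphism of subshifts (a shift-commuting homeomorphism); (3) $\alpha_\sigma$ is shift-orbit injective and shift-period preserving in $\pi_\sigma(X)$; (4) $\sigma$ is shift-orbit injective and shift-period preserving in $X$.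
   Context: A subshift $X\subseteq\mathcal A^{\mathbb Z}$ is a non-empty closed subset invariant under the shift $T$, $T(\mathbf x)_i=x_{i+1}$. A morphism $\sigma$ is non-erasing if $|\sigma(a)|\ge1$ for all letters $a$. For $\mathbf x=\ldots x_{-1}x_0x_1\ldots\in\mathcal A^{\mathbb Z}$, $\sigma^{\mathbb Z}(\mathbf x)$ is the biinfinite word whose positive half $\mathbf y_{[1,\infty)}$ is $\sigma(x_1)\sigma(x_2)\ldots$ and whose negative part is $\ldots\sigma(x_{-1})\sigma(x_0)$ (ending at index $0$). The image subshift $\sigma(X)$ is the smallest subshift containing $\sigma^{\mathbb Z}(X)$ (equivalently the union of the shift-orbits of the $\sigma^{\mathbb Z}(\mathbf x)$, $\mathbf x\in X$). Subdivision: $\mathcal A_\sigma=\{a(k): a\in\mathcal A,\ 1\le k\le|\sigma(a)|\}$, $\pi_\sigma(a)=a(1)a(2)\cdots a(|\sigma(a)|)$, and $\alpha_\sigma(a(k))$ is the $k$-th letter of $\sigma(a)$. $\sigma$ is recognizable in $X$ if: whenever $\mathbf x,\mathbf x'\in X$, $\mathbf y\in\mathcal B^{\mathbb Z}$ satisfy $\mathbf y=T^k(\sigma^{\mathbb Z}(\mathbf x))=T^\ell(\sigma^{\mathbb Z}(\mathbf x'))$ with $0\le k\le|\sigma(x_1)|-1$ and $0\le\ell\le|\sigma(x'_1)|-1$, then $\mathbf x=\mathbf x'$ and $k=\ell$. $\sigma$ is shift-orbit injective in $X$ if for $\mathbf x,\mathbf y\in X$, $\sigma^{\mathbb Z}(\mathbf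 x)$ and $\sigma^{\mathbb Z}(\mathbf y)$ lie in the same shift-orbit iff $\mathbf x,\mathbf y$ lie in the same shift-orbit. $\sigma$ is shift-period preserving in $X$ if for every periodic word $w^{\pm\infty}=\ldots www\ldots\in X$ ($w$ non-empty), $w$ is a proper power (i.e. $w=u^m$ with $m\ge2$) iff $\sigma(w)$ is a proper power. *)

(* Defs.v *)
From Stdlib Require Import ZArith.
From mathcomp Require Import all_boot.
Set Implicit Arguments. Unset Strict Implicit. Unset Printing Implicit Defensive.

Definition shiftn {T : Type} (k : Z) (x : Z -> T) : Z -> T := fun i => x (i + k)%Z.
Definition shift {T : Type} (x : Z -> T) : Z -> T := shiftn 1 x.

Definition agree {T : Type} (n : nat) (x y : Z -> T) : Prop :=
  forall i : Z, (Z.abs i <= Z.of_nat n)%Z -> x i = y i.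

(* closedness for the product topology (discrete alphabet) *)
Definition closedZ {T : Type} (X : (Z -> T) -> Prop) : Prop :=
  forall x, (forall n : nat, exists y, X y /\ agree n y x) -> X x.

Definition subshift {T : Type} (X : (Z -> T) -> Prop) : Prop :=
  (exists x, X x) /\ closedZ X /\ (forall x, X x <-> X (shift x)).

(* a morphism A^* -> B^* is given by the images of the letters *)
Definition nonerasing {A B : Type} (s : A -> seq B) : Prop :=
  forall a, (0 < size (s a))%N.

Definition cut (len : Z -> nat) (n : Z) : Z :=
  if (0 <=? n)%Z then Z.of_nat (\sum_(i < Z.to_nat n) len (Z.of_nat i + 1)%Z)
  else (- Z.of_nat (\sum_(i < Z.to_nat (- n)) len (- Z.of_nat i)%Z))%Z.

(* sigZ s x y  <->  y = s^Z(x): the block s(x_i) occupies positions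
   cut(i-1)+1 .. cut(i); in particular y_[1,oo) = s(x_1)s(x_2)... and the
   negative part ... s(x_-1)s(x_0) ends at index 0. *)
Definition sigZ {A B : Type} (s : A -> seq B) (x : Z -> A) (y : Z -> B) : Prop :=
  forall (i : Z) (k : nat), (k < size (s (x i)))%N ->
    y (cut (fun j => size (s (x j))) (i - 1) + 1 + Z.of_nat k)%Z
    = nth (y 0%Z) (s (x i)) k.

Definition imageZ {A B : Type} (s : A -> seq B) (X : (Z -> A) -> Prop) (y : Z -> B) : Prop :=
  exists x z k, X x /\ sigZ s x z /\ y = shiftn k z.

Definition recognizable {A B : Type} (s : A -> seq B) (X : (Z -> A) -> Prop) : Prop :=
  forall (x x' : Z -> A) (z z' : Z -> B) (k l : nat),
    X x -> X x' -> sigZ s x z -> sigZ s x' z' ->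
    (k < size (s (x 1%Z)))%N -> (l < size (s (x' 1%Z)))%N ->
    shiftn (Z.of_nat k) z = shiftn (Z.of_nat l) z' ->
    x = x' /\ k = l.

Definition same_orbit {T : Type} (x y : Z -> T) : Prop := exists k : Z, y = shiftn k x.

Definition orbit_injective {A B : Type} (s : A -> seq B) (X : (Z -> A) -> Prop) : Prop :=
  forall (x x' : Z -> A) (z z' : Z -> B), X x -> X x' -> sigZ s x z -> sigZ s x' z' ->
    (same_orbit z z' <-> same_orbit x x').

Definition proper_power {T : Type} (u : seq T) : Prop :=
  exists (v : seq T) (m : nat), (2 <= m)%N /\ u = flatten (nseq m v).

(* the periodic word w^{+-oo} for the non-empty word w = a :: w',
   (w^{+-oo})_i = w_(i mod |w|) *)
Definition perw {T : Type} (a : T) (w : seq T) : Z -> T :=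
  fun i => nth a (a :: w) (Z.to_nat (Z.modulo i (Z.of_nat (size w).+1))).

Definition period_preserving {A B : Type} (s : A -> seq B) (X : (Z -> A) -> Prop) : Prop :=
  forall (a : A) (w : seq A), X (perw a w) ->
    (proper_power (a :: w) <-> proper_power (flatten (map s (a :: w)))).

(* subdivision: A_s = { a(k) }, a(k) encoded as (a, k-1) with k-1 < |s a| *)
Definition subdiv_alph {A B : Type} (s : A -> seq B) : Type := {a : A & 'I_(size (s a))}.

Definition pi_sub {A B : Type} (s : A -> seq B) (a : A) : seq (subdiv_alph s) :=
  map (fun k => existT (fun b => 'I_(size (s b))) a k) (enum 'I_(size (s a))).

Definition alpha_letter {A B : Type} (s : A -> seq B) (p : subdiv_alph s) : B :=
  tnth (in_tuple (s (projT1 p))) (projT2 p).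

Definition alpha_morph {A B : Type} (s : A -> seq B) (p : subdiv_alph s) : seq B :=
  [:: alpha_letter p].

Definition alphaZ {A B : Type} (s : A -> seq B) (y : Z -> subdiv_alph s) : Z -> B :=
  fun i => alpha_letter (y i).

(* f restricted to S, co-restricted to S', is an isomorphism of subshifts:
   a shift-commuting homeomorphism from S onto S' *)
Definition subshift_iso {T U : Type} (S : (Z -> T) -> Prop) (S' : (Z -> U) -> Prop)
    (f : (Z -> T) -> (Z -> U)) : Prop :=
  (forall x, S x -> S' (f x)) /\
  (forall x x', S x -> S x' -> f x = f x' -> x = x') /\
  (forall y, S' y -> exists x, S x /\ f x = y) /\
  (forall x, S x -> f (shift x) = shift (f x)) /\
  (forall x, S x -> forall n, exists m, forall x', S x' -> agree m x x' -> agree n (f x) (f x')) /\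
  (forall x, S x -> forall n, exists m, forall x', S x' -> agree m (f x) (f x') -> agree n x x').

(* Main.v *)
Require Import Defs.
From Stdlib Require Import ZArith Lia FunctionalExtensionality ClassicalEpsilon Classical.
From mathcomp Require Import all_boot zify.
Set Warnings "-notation-overridden -parsing".

Lemma cut0 (L : Z -> nat) : cut L 0 = 0%Z.
Proof. by rewrite /cut /= big_ord0. Qed.

Lemma cutS (L : Z -> nat) (n : Z) : cut L n = (cut L (n - 1) + Z.of_nat (L n))%Z.
Proof.
rewrite /cut.
case: (Z.leb_spec 0 n) => Hn.
- case: (Z.leb_spec 0 (n-1)) => Hn1.
  + have -> : Z.to_nat n = (Z.to_nat (n-1)).+1 by lia.
    rewrite big_ord_recr /= Nat2Z.inj_add.
    by have -> : (Z.of_nat (Z.to_nat (n-1)) + 1 = n)%Z by lia.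
  + have -> : n = 0%Z by lia.
    rewrite /= big_ord0 big_ord_recr /= big_ord0 /=. lia.
- case: (Z.leb_spec 0 (n-1)) => Hn1; first lia.
  have -> : Z.to_nat (-(n-1)) = (Z.to_nat (-n)).+1 by lia.
  rewrite big_ord_recr /= Nat2Z.inj_add.
  have -> : (- Z.of_nat (Z.to_nat (- n)))%Z = n by lia.
  lia.
Qed.

Lemma rec_uniq (L : Z -> nat) (f g : Z -> Z) :
  f 0%Z = g 0%Z ->
  (forall n, f n = f (n-1) + Z.of_nat (L n))%Z ->
  (forall n, g n = g (n-1) + Z.of_nat (L n))%Z ->
  forall n, f n = g n.
Proof.
move=> H0 Hf Hg.
have Hp : forall m : nat, f (Z.of_nat m) = g (Z.of_nat m) /\ f (- Z.of_nat m)%Z = g (- Z.of_nat m)%Z.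
  elim=> [|m [IH1 IH2]]; first by rewrite /=.
  split.
  - rewrite (Hf (Z.of_nat m.+1)) (Hg (Z.of_nat m.+1)).
    have -> : (Z.of_nat m.+1 - 1 = Z.of_nat m)%Z by lia. by rewrite IH1.
  - have E1 := Hf (- Z.of_nat m)%Z. have E2 := Hg (- Z.of_nat m)%Z.
    have -> : (- Z.of_nat m.+1 = - Z.of_nat m - 1)%Z by lia. lia.
move=> n. case: (Z.leb_spec 0 n) => Hn.
- have -> : n = Z.of_nat (Z.to_nat n) by lia. exact: (Hp _).1.
- have -> : n = (- Z.of_nat (Z.to_nat (-n)))%Z by lia. exact: (Hp _).2.
Qed.

Lemma cut_shift (L : Z -> nat) (i n : Z) :
  cut (fun j => L (j + i)%Z) n = (cut L (n + i) - cut L i)%Z.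
Proof.
apply: (@rec_uniq (fun j => L (j + i)%Z) (cut (fun j => L (j + i)%Z)) (fun n => cut L (n + i) - cut L i)%Z).
- rewrite cut0 /=. lia.
- move=> m; exact: cutS.
- move=> m. rewrite (cutS L (m + i)). have -> : (m + i - 1 = m - 1 + i)%Z by lia. lia.
Qed.

Lemma cut_ext (L L' : Z -> nat) : (forall j, L j = L' j) -> forall n, cut L n = cut L' n.
Proof. move=> H n. by have -> : L = L' by apply: functional_extensionality. Qed.

Section Mono.
Variable L : Z -> nat.
Hypothesis Lpos : forall j, (0 < L j)%N.

Lemma cut_step n : (cut L (n-1) + 1 <= cut L n)%Z.
Proof. rewrite (cutS L n). have := Lpos n. lia. Qed.

Lemma cut_mono_d (i : Z) (d : nat) : (cut L i + Z.of_nat d <= cut L (i + Z.of_nat d))%Z.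
Proof.
elim: d => [|d IH]; first by rewrite /= !Z.add_0_r; lia.
have := cut_step (i + Z.of_nat d.+1)%Z. have -> : (i + Z.of_nat d.+1 - 1 = i + Z.of_nat d)%Z by lia.
lia.
Qed.

Lemma cut_mono i j : (i <= j)%Z -> (cut L i + (j - i) <= cut L j)%Z.
Proof.
move=> Hij. have := cut_mono_d i (Z.to_nat (j - i)).
have -> : (i + Z.of_nat (Z.to_nat (j - i)) = j)%Z by lia. lia.
Qed.

Lemma cut_lt i j : (i < j)%Z -> (cut L i < cut L j)%Z.
Proof. move=> H; have := cut_mono i j. lia. Qed.

Lemma cut_le i j : (i <= j)%Z -> (cut L i <= cut L j)%Z.
Proof. move=> H; have := cut_mono i j H. lia. Qed.

Lemma cut_ge_id i : (0 <= i)%Z -> (i <= cut L i)%Z.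
Proof. move=> H; have := cut_mono _ _ H. rewrite cut0. lia. Qed.

Lemma cut_le_id i : (i <= 0)%Z -> (cut L i <= i)%Z.
Proof. move=> H; have := cut_mono _ _ H. rewrite cut0. lia. Qed.

Lemma decomp p : exists i, (cut L (i-1) < p <= cut L i)%Z.
Proof.
pose P p := exists i, (cut L (i-1) < p <= cut L i)%Z.
have Hb : forall d : nat, P (cut L 0 + Z.of_nat d)%Z /\ P (cut L 0 - Z.of_nat d)%Z.
  elim=> [|d [[i Hi] [i' Hi']]].
  - split; exists 0%Z; have := cut_step 0; lia.
  - split.
    + case: (Z.leb_spec (cut L 0 + Z.of_nat d.+1) (cut L i)) => H.
      * exists i; lia.
      * exists (i+1)%Z. have := cut_step (i+1)%Z. have -> : (i + 1 - 1 = i)%Z by lia. lia.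
    + case: (Z.ltb_spec (cut L (i'-1)) (cut L 0 - Z.of_nat d.+1)) => H.
      * exists i'; lia.
      * exists (i'-1)%Z. have := cut_step (i'-1)%Z. lia.
case: (Z.leb_spec 0 (p - cut L 0)) => H.
- have := (Hb (Z.to_nat (p - cut L 0))).1. by have -> : (cut L 0 + Z.of_nat (Z.to_nat (p - cut L 0)) = p)%Z by lia.
- have := (Hb (Z.to_nat (cut L 0 - p))).2. by have -> : (cut L 0 - Z.of_nat (Z.to_nat (cut L 0 - p)) = p)%Z by lia.
Qed.

Lemma decomp_uniq p i j : (cut L (i-1) < p <= cut L i)%Z -> (cut L (j-1) < p <= cut L j)%Z -> i = j.
Proof.
move=> Hi Hj. case: (Z.lt_total i j) => [H|[H|H]] //.
- have := cut_le i (j-1)%Z. lia.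
- have := cut_le j (i-1)%Z. lia.
Qed.

End Mono.


Lemma shiftn_add {T : Type} (a b : Z) (z : Z -> T) : shiftn a (shiftn b z) = shiftn (a + b) z.
Proof. apply: functional_extensionality => i. rewrite /shiftn. by rewrite Z.add_assoc. Qed.

Lemma shiftn0 {T : Type} (z : Z -> T) : shiftn 0 z = z.
Proof. apply: functional_extensionality => i. by rewrite /shiftn Z.add_0_r. Qed.

Lemma shiftn_inj {T : Type} (a : Z) (z z' : Z -> T) : shiftn a z = shiftn a z' -> z = z'.
Proof. move=> H. rewrite -(shiftn0 z) -(shiftn0 z') -(Z.add_opp_diag_l a) -!shiftn_add. by rewrite H. Qed.

Section Decomp.
Variable L : Z -> nat.
Hypothesis Lpos : forall j, (0 < L j)%N.

Lemma pos_decomp p : exists i k, (k < L i)%N /\ p = (cut L (i-1) + 1 + Z.of_nat k)%Z.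
Proof.
have [i Hi] := decomp L Lpos p. exists i, (Z.to_nat (p - cut L (i-1) - 1)).
rewrite (cutS L i) in Hi. split; lia.
Qed.

Lemma pos_uniq i k i' k' : (k < L i)%N -> (k' < L i')%N ->
  (cut L (i-1) + 1 + Z.of_nat k)%Z = (cut L (i'-1) + 1 + Z.of_nat k')%Z -> i = i' /\ k = k'.
Proof.
move=> Hk Hk' E.
have Ei : i = i'.
  apply: (decomp_uniq L Lpos (cut L (i-1) + 1 + Z.of_nat k)%Z).
  - rewrite (cutS L i); lia.
  - rewrite (cutS L i') E; lia.
subst i'. split=> //. lia.
Qed.

Lemma shift_decomp j : exists i k, (k < L (i+1))%N /\ j = (cut L i + Z.of_nat k)%Z.
Proof.
have [i [k [Hk E]]] := pos_decomp (j+1)%Z. exists (i-1)%Z, k.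
have -> : (i - 1 + 1 = i)%Z by lia. split=> //. lia.
Qed.

Lemma cut_range i : (0 < i)%Z -> (0 < cut L i)%Z.
Proof. move=> H. have := cut_ge_id L Lpos i. have := cut_lt L Lpos 0 i H. rewrite cut0. lia. Qed.

End Decomp.

Section Sig.
Variables (A B : Type) (s : A -> seq B).
Hypothesis ne : nonerasing s.

Definition Ls (x : Z -> A) : Z -> nat := fun j => size (s (x j)).

Lemma Ls_pos x j : (0 < Ls x j)%N.
Proof. exact: ne. Qed.

Lemma sig_uniq x z z' : sigZ s x z -> sigZ s x z' -> z = z'.
Proof.
move=> H H'. apply: functional_extensionality => p.
have [i [k [Hk ->]]] := pos_decomp (Ls x) (Ls_pos x) p.
rewrite (H i k Hk) (H' i k Hk). exact: set_nth_default.
Qed.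

Lemma sig_ex x : exists z, sigZ s x z.
Proof.
have := ne (x 0%Z). case E: (s (x 0%Z)) => [|b l] //= _.
have Hp : forall p, exists v, forall i k, (k < Ls x i)%N -> p = (cut (Ls x) (i-1) + 1 + Z.of_nat k)%Z ->
     v = nth b (s (x i)) k.
  move=> p. have [i [k [Hk Ep]]] := pos_decomp (Ls x) (Ls_pos x) p.
  exists (nth b (s (x i)) k) => i' k' Hk' Ep'.
  rewrite Ep in Ep'. have [<- <-] := pos_uniq (Ls x) (Ls_pos x) i k i' k' Hk Hk' Ep'. done.
exists (fun p => proj1_sig (constructive_indefinite_description _ (Hp p))).
move=> i k Hk. set p := (_ + _ + _)%Z.
case: (constructive_indefinite_description _ (Hp p)) => v Hv /=.
rewrite (Hv i k Hk erefl). exact: set_nth_default.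
Qed.

Lemma sig_shift x z i : sigZ s x z -> sigZ s (shiftn i x) (shiftn (cut (Ls x) i) z).
Proof.
move=> H j k Hk. rewrite /shiftn.
have E : cut (fun j0 : Z => size (s (x (j0 + i)%Z))) (j - 1) = (cut (Ls x) (j - 1 + i) - cut (Ls x) i)%Z.
  exact: (cut_shift (Ls x) i (j-1)).
rewrite E.
have -> : (cut (Ls x) (j - 1 + i) - cut (Ls x) i + 1 + Z.of_nat k + cut (Ls x) i
   = cut (Ls x) ((j + i) - 1) + 1 + Z.of_nat k)%Z.
  have -> : (j + i - 1 = j - 1 + i)%Z by lia. lia.
rewrite (H (j+i)%Z k Hk). exact: set_nth_default.
Qed.

Lemma cutLs_shift x i n : cut (Ls (shiftn i x)) n = (cut (Ls x) (n + i) - cut (Ls x) i)%Z.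
Proof. exact: (cut_shift (Ls x) i n). Qed.

End Sig.

Lemma X_shiftn {A : Type} (X : (Z -> A) -> Prop) : subshift X -> forall x k, X x -> X (shiftn k x).
Proof.
move=> [_ [_ HX]] x k Hx.
have H1 : forall y, X y -> X (shiftn 1 y) by move=> y Hy; exact: (proj1 (HX y) Hy).
have H2 : forall y, X y -> X (shiftn (-1) y).
  move=> y Hy. apply: (proj2 (HX (shiftn (-1) y))). change (X (shiftn 1 (shiftn (-1) y))). rewrite shiftn_add /=. by rewrite shiftn0.
have Hn : forall n : nat, X (shiftn (Z.of_nat n) x) /\ X (shiftn (- Z.of_nat n) x).
  elim=> [|n [IH1 IH2]]; first by rewrite /= shiftn0.
  split.
  - have := H1 _ IH1. rewrite shiftn_add. by have -> : (1 + Z.of_nat n = Z.of_nat n.+1)%Z by lia.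
  - have := H2 _ IH2. rewrite shiftn_add. by have -> : (-1 + - Z.of_nat n = - Z.of_nat n.+1)%Z by lia.
case: (Z.leb_spec 0 k) => Hk.
- have -> : k = Z.of_nat (Z.to_nat k) by lia. exact: (Hn _).1.
- have -> : k = (- Z.of_nat (Z.to_nat (-k)))%Z by lia. exact: (Hn _).2.
Qed.
Arguments Ls {A B} s x _.
Arguments Ls_pos {A B s} ne x j.
Arguments sig_uniq {A B s} ne {x z z'}.
Arguments sig_ex {A B s} ne x.
Arguments sig_shift {A B s x z} i.
Arguments cutLs_shift {A B} s x i n.


Section Agree.
Variable T : Type.
Implicit Types u v w : Z -> T.

Lemma agree_refl r u : agree r u u. Proof. by []. Qed.
Lemma agree_sym r u v : agree r u v -> agree r v u.
Proof. move=> H i Hi; by rewrite H. Qed.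
Lemma agree_trans r u v w : agree r u v -> agree r v w -> agree r u w.
Proof. move=> H H' i Hi; by rewrite H ?H'. Qed.
Lemma agree_mono r r' u v : (r <= r')%N -> agree r' u v -> agree r u v.
Proof. move=> Hr H i Hi; apply: H; lia. Qed.
Lemma agree_shift r c u v : agree (r + Z.to_nat (Z.abs c)) u v -> agree r (shiftn c u) (shiftn c v).
Proof. move=> H i Hi. rewrite /shiftn. apply: H. lia. Qed.
Lemma agree_all u v : (forall r, agree r u v) -> u = v.
Proof. move=> H. apply: functional_extensionality => i. apply: (H (Z.to_nat (Z.abs i))). lia. Qed.
End Agree.

Lemma cut_agree (L L' : Z -> nat) (R : nat) :
  (forall j, (Z.abs j <= Z.of_nat R)%Z -> L j = L' j) ->
  forall j, (- Z.of_nat R - 1 <= j <= Z.of_nat R)%Z -> cut L j = cut L' j.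
Proof.
move=> H.
have Hp : forall n : nat, (n <= R)%N -> cut L (Z.of_nat n) = cut L' (Z.of_nat n).
  elim=> [|n IH] Hn; first by rewrite !cut0.
  rewrite (cutS L) (cutS L'). have -> : (Z.of_nat n.+1 - 1 = Z.of_nat n)%Z by lia.
  rewrite IH; last lia. rewrite H //. lia.
have Hm : forall n : nat, (n <= R.+1)%N -> cut L (- Z.of_nat n) = cut L' (- Z.of_nat n).
  elim=> [|n IH] Hn; first by rewrite /= !cut0.
  have E1 := cutS L (- Z.of_nat n). have E2 := cutS L' (- Z.of_nat n).
  have -> : (- Z.of_nat n.+1 = - Z.of_nat n - 1)%Z by lia.
  have HL : L (- Z.of_nat n)%Z = L' (- Z.of_nat n)%Z by apply: H; lia.
  have := IH ltac:(lia). lia.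
move=> j Hj. case: (Z.leb_spec 0 j) => Hj0.
- have -> : j = Z.of_nat (Z.to_nat j) by lia. apply: Hp. lia.
- have -> : j = (- Z.of_nat (Z.to_nat (-j)))%Z by lia. apply: Hm. lia.
Qed.

Section SigCont.
Variables (A B : Type) (s : A -> seq B).
Hypothesis ne : nonerasing s.

Lemma sig_cont x x' z z' R : sigZ s x z -> sigZ s x' z' -> agree R x x' -> agree R z z'.
Proof.
move=> H H' Ha p Hp.
have [i [k [Hk Ep]]] := pos_decomp (Ls s x) (Ls_pos ne x) p.
have Hi : (Z.abs i <= Z.of_nat R)%Z.
  have E := cutS (Ls s x) i.
  case: (Z.leb_spec i 0) => Hi0.
  - have := cut_le_id (Ls s x) (Ls_pos ne x) i Hi0. lia.
  - have := cut_ge_id (Ls s x) (Ls_pos ne x) (i-1) ltac:(lia). lia.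
have Ec : cut (Ls s x) (i-1) = cut (Ls s x') (i-1).
  apply: (cut_agree _ _ R) => [j Hj|]; last lia. by rewrite /Ls Ha.
have Exi : x i = x' i by apply: Ha.
rewrite Ep (H i k Hk).
have Hk' : (k < Ls s x' i)%N by rewrite /Ls -Exi.
have := H' i k Hk'. rewrite /Ls in Ec. rewrite Ec => ->. rewrite Exi. exact: set_nth_default.
Qed.

Lemma image_canon (X : (Z -> A) -> Prop) y : subshift X -> imageZ s X y ->
  exists x z k, X x /\ sigZ s x z /\ (k < size (s (x 1%Z)))%N /\ y = shiftn (Z.of_nat k) z.
Proof.
move=> HX [x0 [z0 [j [Hx0 [Hz0 ->]]]]].
have [i [k [Hk Ej]]] := shift_decomp (Ls s x0) (Ls_pos ne x0) j.
exists (shiftn i x0), (shiftn (cut (Ls s x0) i) z0), k. split; first exact: X_shiftn.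
split; first exact: sig_shift. split.
- rewrite /shiftn. by rewrite Z.add_comm.
- by rewrite shiftn_add Ej Z.add_comm.
Qed.

Lemma image_shift (X : (Z -> A) -> Prop) y c : imageZ s X y -> imageZ s X (shiftn c y).
Proof. move=> [x [z [j [Hx [Hz ->]]]]]. exists x, z, (c + j)%Z. by rewrite shiftn_add. Qed.

End SigCont.

Lemma PH (K : finType) (P : nat -> Prop) (h : nat -> K) :
  (forall N, exists n, (N <= n)%N /\ P n) ->
  exists k, forall N, exists n, (N <= n)%N /\ P n /\ h n = k.
Proof.
move=> HP. apply: NNPP => Hn.
have H1 : forall k, exists N, forall n, (N <= n)%N -> P n -> h n <> k.
  move=> k. apply: NNPP => H2. apply: Hn. exists k => N. apply: NNPP => H3. apply: H2. exists N => n Hn1 Hn2 Hn3.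
  apply: H3. by exists n.
pose Nf k := proj1_sig (constructive_indefinite_description _ (H1 k)).
have HNf : forall k n, (Nf k <= n)%N -> P n -> h n <> k.
  move=> k. rewrite /Nf. by case: (constructive_indefinite_description _ (H1 k)).
have [n [Hn1 Hn2]] := HP (\max_(k : K) Nf k).
apply: (HNf (h n) n) => //. apply: leq_trans Hn1. exact: leq_bigmax.
Qed.

Lemma PH_anti (K : finType) (P : nat -> K -> Prop) :
  (forall r r' k, (r <= r')%N -> P r' k -> P r k) ->
  (forall r, exists k, P r k) -> exists k, forall r, P r k.
Proof.
move=> Hm Hr.
have [k Hk] := PH _ (fun _ => True) (fun r => proj1_sig (constructive_indefinite_description _ (Hr r)))
  (fun N => ex_intro _ N (conj (leqnn N) I)).
exists k => r. have [n [Hn [_ Hh]]] := Hk r. apply: (Hm r n) => //.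
move: Hh. case: (constructive_indefinite_description _ (Hr n)) => k' Hk' /= <-. done.
Qed.

Section Cluster.
Variable A : finType.
Variable f : nat -> Z -> A.
Variable Q : nat -> Prop.
Hypothesis HQ : forall N, exists n, (N <= n)%N /\ Q n.

Definition Inf r g := forall N, exists n, (N <= n)%N /\ Q n /\ agree r (f n) g.

Lemma Inf0 : exists g, Inf 0 g.
Proof.
have [a Ha] := PH _ Q (fun n => f n 0%Z) HQ.
exists (fun _ => a) => N. have [n [H1 [H2 H3]]] := Ha N. exists n; split=> //; split=> //.
move=> i Hi. have -> : i = 0%Z by lia. done.
Qed.

Lemma InfS r g : Inf r g -> exists g', Inf r.+1 g' /\ agree r g g'.
Proof.
move=> Hg.
have HQ' : forall N, exists n, (N <= n)%N /\ (Q n /\ agree r (f n) g).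
  move=> N. have [n [H1 [H2 H3]]] := Hg N. by exists n.
have [[a b] Hab] := PH _ _ (fun n => (f n (- Z.of_nat r.+1)%Z, f n (Z.of_nat r.+1))) HQ'.
exists (fun i => if (i =? - Z.of_nat r.+1)%Z then a else if (i =? Z.of_nat r.+1)%Z then b else g i).
split.
- move=> N. have [n [H1 [[H2 H3] H4]]] := Hab N. exists n; split=> //; split=> //.
  case: H4 => Ha Hb. move=> i Hi.
  case: (Z.eqb_spec i (- Z.of_nat r.+1)) => E1; first by rewrite E1.
  case: (Z.eqb_spec i (Z.of_nat r.+1)) => E2; first by rewrite E2.
  apply: H3. lia.
- move=> i Hi.
  case: (Z.eqb_spec i (- Z.of_nat r.+1)) => E1; first lia.
  case: (Z.eqb_spec i (Z.of_nat r.+1)) => E2; first lia. done.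
Qed.

Fixpoint Gseq (r : nat) : {g | Inf r g} :=
  match r with
  | 0 => constructive_indefinite_description _ Inf0
  | r'.+1 => let g := Gseq r' in
      exist _ (proj1_sig (constructive_indefinite_description _ (InfS _ _ (proj2_sig g))))
              (proj1 (proj2_sig (constructive_indefinite_description _ (InfS _ _ (proj2_sig g)))))
  end.

Lemma Gseq_step r : agree r (proj1_sig (Gseq r)) (proj1_sig (Gseq r.+1)).
Proof.
rewrite /=. exact: (proj2 (proj2_sig (constructive_indefinite_description _ (InfS _ _ (proj2_sig (Gseq r)))))).
Qed.

Lemma Gseq_chain t d : agree t (proj1_sig (Gseq t)) (proj1_sig (Gseq (t + d))).
Proof.
elim: d => [|d IH]; first by rewrite addn0.
apply: agree_trans IH _. rewrite addnS. apply: agree_mono (Gseq_step _). lia.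
Qed.

Lemma cluster : exists y, forall r N, exists n, (N <= n)%N /\ Q n /\ agree r (f n) y.
Proof.
exists (fun i => proj1_sig (Gseq (Z.to_nat (Z.abs i))) i) => r N.
have [n [H1 [H2 H3]]] := proj2_sig (Gseq r) N.
exists n; split=> //; split=> //. move=> i Hi. rewrite H3 //.
set t := Z.to_nat (Z.abs i).
have Ht : (t <= r)%N by rewrite /t; lia.
have := Gseq_chain t (r - t). rewrite subnKC //. move=> Hc. symmetry. apply: Hc. rewrite /t. lia.
Qed.

End Cluster.


Section Closed.
Variables (A : finType) (B : Type) (s : A -> seq B) (X : (Z -> A) -> Prop).
Hypothesis ne : nonerasing s.
Hypothesis HX : subshift X.

Lemma image_closed : closedZ (imageZ s X).
Proof.
move=> y Hy.
have H1 : forall n : nat, exists p : (Z -> A) * (Z -> B) * nat,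
    X p.1.1 /\ sigZ s p.1.1 p.1.2 /\ (p.2 < size (s (p.1.1 1%Z)))%N /\ agree n (shiftn (Z.of_nat p.2) p.1.2) y.
  move=> n. have [y' [Hy' Ha]] := Hy n.
  have [x [z [k [Hx [Hz [Hk E]]]]]] := image_canon A B s ne X y' HX Hy'.
  exists (x, z, k). rewrite /= -E. done.
pose F n := proj1_sig (constructive_indefinite_description _ (H1 n)).
have HF : forall n, X (F n).1.1 /\ sigZ s (F n).1.1 (F n).1.2 /\ ((F n).2 < size (s ((F n).1.1 1%Z)))%N
     /\ agree n (shiftn (Z.of_nat (F n).2) (F n).1.2) y.
  move=> n. rewrite /F. by case: (constructive_indefinite_description _ (H1 n)).
pose Lmax := \max_(a : A) size (s a).
have HL : forall n, ((F n).2 <= Lmax)%N.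
  move=> n. have [_ [_ [Hk _]]] := HF n. apply: leq_trans (ltnW Hk) _.
  rewrite /Lmax. exact: (@leq_bigmax A (fun a => size (s a))).
have [k Hk] := PH ('I_Lmax.+1) (fun _ => True) (fun n => inord (F n).2)
  (fun N => ex_intro _ N (conj (leqnn N) I)).
pose Q n := (F n).2 = nat_of_ord k.
have HQ : forall N, exists n, (N <= n)%N /\ Q n.
  move=> N. have [n [H2 [_ H3]]] := Hk N. exists n; split=> //. rewrite /Q -H3 inordK //. by rewrite ltnS.
have [xs Hxs] := cluster A (fun n => (F n).1.1) Q HQ.
have Xxs : X xs.
  case: HX => _ [Hc _]. apply: Hc => r. have [n [_ [_ Ha]]] := Hxs r 0%N.
  exists (F n).1.1. split; [exact: (HF n).1 | exact: Ha].
have [zs Hzs] := sig_ex ne xs.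
exists xs, zs, (Z.of_nat k). split=> //. split=> //.
apply: agree_all => r.
have [n [Hn [HQn Ha]]] := Hxs (r + k)%N r.
have [_ [Hzn [_ Hay]]] := HF n.
have Hz := sig_cont A B s ne _ _ _ _ (r + k)%N Hzn Hzs Ha.
apply: agree_trans (agree_sym _ _ _ _ (agree_mono _ _ _ _ _ Hn Hay)) _.
rewrite HQn. apply: agree_shift. have -> : Z.to_nat (Z.abs (Z.of_nat k)) = nat_of_ord k by lia.
exact: Hz.
Qed.

Lemma image_subshift : subshift (imageZ s X).
Proof.
split; [|split].
- case: HX => [[x Hx] _]. have [z Hz] := sig_ex ne x. exists z, x, z, 0%Z. by rewrite shiftn0.
- exact: image_closed.
- move=> y; split => H.
  + exact: (image_shift A B s X y 1 H).
  + have := image_shift A B s X _ (-1) H. rewrite /shift shiftn_add /=. by rewrite shiftn0.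
Qed.

End Closed.


Lemma per_mul {T : Type} (f : Z -> T) p : shiftn p f = f -> forall t, shiftn (t * p) f = f.
Proof.
move=> H.
have Hn : forall n : nat, shiftn (Z.of_nat n * p) f = f /\ shiftn (- Z.of_nat n * p) f = f.
  elim=> [|n [IH1 IH2]]; first by rewrite /= shiftn0.
  split.
  - have -> : (Z.of_nat n.+1 * p = p + Z.of_nat n * p)%Z by lia. by rewrite -shiftn_add IH1.
  - have E : shiftn (- p) f = f by rewrite -{1}H shiftn_add Z.add_opp_diag_l shiftn0.
    have -> : (- Z.of_nat n.+1 * p = - p + - Z.of_nat n * p)%Z by lia. by rewrite -shiftn_add IH2.
move=> t. case: (Z.leb_spec 0 t) => Ht.
- have -> : t = Z.of_nat (Z.to_nat t) by lia. exact: (Hn _).1.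
- have -> : t = (- Z.of_nat (Z.to_nat (-t)))%Z by lia. exact: (Hn _).2.
Qed.

Lemma per_add {T : Type} (f : Z -> T) p q : shiftn p f = f -> shiftn q f = f -> shiftn (p + q) f = f.
Proof. move=> H1 H2. by rewrite -shiftn_add H2 H1. Qed.

Lemma per_lin {T : Type} (f : Z -> T) p q : shiftn p f = f -> shiftn q f = f -> forall a b, shiftn (a * p + b * q) f = f.
Proof. move=> H1 H2 a b. apply: per_add; exact: per_mul. Qed.

Lemma per_gcd {T : Type} (f : Z -> T) p q : shiftn p f = f -> shiftn q f = f -> shiftn (Z.gcd p q) f = f.
Proof.
move=> H1 H2. have [u [v E]] := Z.gcd_bezout p q _ erefl.
have := per_lin f p q H1 H2 u v. by rewrite E.
Qed.

Lemma per_app {T : Type} (f : Z -> T) p : shiftn p f = f -> forall i, f (i + p)%Z = f i.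
Proof. move=> H i. have := f_equal (fun g => g i) H. by rewrite /shiftn. Qed.

Section Periodic.
Variables (A : finType) (B : Type) (s : A -> seq B) (X : (Z -> A) -> Prop).
Hypothesis ne : nonerasing s.
Hypothesis HX : subshift X.
Hypothesis Horb : orbit_injective s X.
Variables (x : Z -> A) (z : Z -> B) (p : Z).
Hypothesis Hx : X x.
Hypothesis Hz : sigZ s x z.
Hypothesis Hp : (0 < p)%Z.
Hypothesis Hper : shiftn p z = z.
Hypothesis NP : forall q, q <> 0%Z -> shiftn q x <> x.

Lemma closedX y : (forall r, exists m, agree r y (shiftn m x)) -> X y.
Proof.
move=> H. case: HX => _ [Hc _]. apply: Hc => r. have [m Hm] := H r.
exists (shiftn m x). split; [exact: X_shiftn | exact: agree_sym].
Qed.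

Lemma orbit_limit y : (forall r, exists m, agree r y (shiftn m x)) -> exists j, y = shiftn j x.
Proof.
move=> H. have Xy := closedX _ H. have [zy Hzy] := sig_ex ne y.
pose pn := Z.to_nat p.
have H1 : forall r, exists c : 'I_pn, agree r zy (shiftn (Z.of_nat c) z).
  move=> r. have [m Hm] := H r.
  have Hs := sig_shift m Hz.
  have Ha := sig_cont A B s ne _ _ _ _ r Hzy Hs Hm.
  set cm := cut (Ls s x) m in Ha.
  have [Hb1 Hb2] := Z.mod_pos_bound cm p Hp.
  move: Hb1 Hb2. set cmp := (cm mod p)%Z. move=> Hb1 Hb2.
  have Hc : (Z.to_nat cmp < pn)%N by rewrite /pn; lia.
  exists (Ordinal Hc) => /=.
  have -> : Z.of_nat (Z.to_nat cmp) = cmp by lia.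
  have E : shiftn cm z = shiftn (cm mod p) z.
    have Ed := Z.div_mod cm p ltac:(lia). rewrite -/cmp in Ed.
    rewrite {1}Ed Z.add_comm -shiftn_add Z.mul_comm per_mul //.
  by rewrite -E.
have [c Hc] := PH_anti ('I_pn) (fun r c => agree r zy (shiftn (Z.of_nat c) z))
  (fun r r' c Hr H => agree_mono _ _ _ _ _ Hr H) H1.
have E : zy = shiftn (Z.of_nat c) z by apply: agree_all.
have [k Hk] : same_orbit y x.
  apply/(Horb y x zy z Xy Hx Hzy Hz). exists (- Z.of_nat c)%Z. by rewrite E shiftn_add Z.add_opp_diag_l shiftn0.
exists (- k)%Z. by rewrite Hk shiftn_add Z.add_opp_diag_l shiftn0.
Qed.

Lemma recur m r : exists m', m' <> m /\ agree r (shiftn m x) (shiftn m' x).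
Proof.
apply: NNPP => Hn.
have [y Hy] := cluster A (fun n => shiftn (Z.of_nat n) x) (fun _ => True)
  (fun N => ex_intro _ N (conj (leqnn N) I)).
have Hy' : forall r, exists m, agree r y (shiftn m x).
  move=> r'. have [n [_ [_ Ha]]] := Hy r' 0%N. exists (Z.of_nat n). exact: agree_sym.
have [j Ej] := orbit_limit _ Hy'.
have [n [Hnn [_ Ha]]] := Hy (r + Z.to_nat (Z.abs (m - j)))%N (Z.to_nat j).+1.
rewrite Ej in Ha.
have Ha' := agree_shift _ _ (m - j)%Z _ _ Ha.
rewrite !shiftn_add in Ha'.
have Emj : (m - j + j = m)%Z by lia. rewrite Emj in Ha'.
apply: Hn. exists (m - j + Z.of_nat n)%Z. split; first lia. exact: agree_sym.
Qed.

Lemma avoid m r j : exists m' r', (r < r')%N /\ agree r (shiftn m x) (shiftn m' x) /\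
  ~ agree r' (shiftn m' x) (shiftn j x).
Proof.
have [m1 [Hm1 Ha1]] := recur m r.
have Hneq : shiftn m x <> shiftn m1 x.
  move=> E. apply: (NP (m1 - m)%Z); first lia.
  have := f_equal (shiftn (- m)) E. rewrite !shiftn_add Z.add_opp_diag_l shiftn0.
  by have -> : (- m + m1 = m1 - m)%Z by lia.
have [m2 [Hm2 Hne]] : exists m2, agree r (shiftn m x) (shiftn m2 x) /\ shiftn m2 x <> shiftn j x.
  case: (classic (shiftn m x = shiftn j x)) => E.
  - exists m1. split=> //. by rewrite -E => /esym.
  - by exists m.
have [i Hi] : exists i, shiftn m2 x i <> shiftn j x i.
  apply: NNPP => H. apply: Hne. apply: functional_extensionality => i. apply: NNPP => H'. apply: H. by exists i.
exists m2, (maxn r (Z.to_nat (Z.abs i))).+1. split; first lia. split=> //.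
move=> Ha. apply: Hi. apply: Ha. lia.
Qed.

Lemma avoid2 (q : Z * nat) (t : nat) : exists q' : Z * nat, (q.2 < q'.2)%N /\
  agree q.2 (shiftn q.1 x) (shiftn q'.1 x) /\
  ~ agree q'.2 (shiftn q'.1 x) (shiftn (Z.of_nat t) x) /\
  ~ agree q'.2 (shiftn q'.1 x) (shiftn (- Z.of_nat t) x).
Proof.
have [m1 [r1 [H1 [H2 H3]]]] := avoid q.1 q.2 (Z.of_nat t).
have [m2 [r2 [H4 [H5 H6]]]] := avoid m1 r1 (- Z.of_nat t)%Z.
exists (m2, r2) => /=. split; first lia. split.
- apply: agree_trans H2 _. apply: agree_mono H5. lia.
- split=> // Ha. apply: H3. apply: agree_trans H5 _. apply: agree_mono Ha. lia.
Qed.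

Fixpoint Sq (t : nat) : Z * nat :=
  match t with
  | 0 => (0%Z, 0%N)
  | t'.+1 => proj1_sig (constructive_indefinite_description _ (avoid2 (Sq t') t'))
  end.

Lemma Sq_step t : ((Sq t).2 < (Sq t.+1).2)%N /\
  agree (Sq t).2 (shiftn (Sq t).1 x) (shiftn (Sq t.+1).1 x) /\
  ~ agree (Sq t.+1).2 (shiftn (Sq t.+1).1 x) (shiftn (Z.of_nat t) x) /\
  ~ agree (Sq t.+1).2 (shiftn (Sq t.+1).1 x) (shiftn (- Z.of_nat t) x).
Proof. rewrite /=. exact: (proj2_sig (constructive_indefinite_description _ (avoid2 (Sq t) t))). Qed.

Lemma Sq_ge t : (t <= (Sq t).2)%N.
Proof. elim: t => [|t IH] //. have [H _] := Sq_step t. lia. Qed.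

Lemma Sq_chain t d : ((Sq t).2 <= (Sq (t + d)).2)%N /\ agree (Sq t).2 (shiftn (Sq t).1 x) (shiftn (Sq (t+d)).1 x).
Proof.
elim: d => [|d [IH1 IH2]]; first by rewrite addn0.
have [H1 [H2 _]] := Sq_step (t + d). rewrite addnS. split; first lia.
apply: agree_trans IH2 _. apply: agree_mono H2. lia.
Qed.

Lemma no_periodic_contra : False.
Proof.
pose y := fun i => shiftn (Sq (Z.to_nat (Z.abs i))).1 x i.
have Hy : forall t, agree (Sq t).2 y (shiftn (Sq t).1 x).
  move=> t i Hi. rewrite /y. set u := Z.to_nat (Z.abs i).
  case: (leqP u t) => Hut.
  - have [H1 H2] := Sq_chain u (t - u). rewrite subnKC // in H1 H2.
    apply: H2. have := Sq_ge u. rewrite /u. lia.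
  - have [H1 H2] := Sq_chain t (u - t). rewrite subnKC in H1 H2; last by apply: ltnW.
    symmetry. apply: H2. done.
have Hy' : forall r, exists m, agree r y (shiftn m x).
  move=> r. exists (Sq r).1. apply: agree_mono (Hy r). exact: Sq_ge.
have [j Ej] := orbit_limit _ Hy'.
have [_ [_ [H3 H4]]] := Sq_step (Z.to_nat (Z.abs j)).
have Ha := Hy (Z.to_nat (Z.abs j)).+1. rewrite Ej in Ha.
case: (Z.leb_spec 0 j) => Hj.
- apply: H3. have -> : Z.of_nat (Z.to_nat (Z.abs j)) = j by lia. exact: agree_sym.
- apply: H4. have -> : (- Z.of_nat (Z.to_nat (Z.abs j)))%Z = j by lia. exact: agree_sym.
Qed.

End Periodic.

Lemma periodicity (A : finType) (B : Type) (s : A -> seq B) (X : (Z -> A) -> Prop) :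
  nonerasing s -> subshift X -> orbit_injective s X ->
  forall x z p, X x -> sigZ s x z -> p <> 0%Z -> shiftn p z = z ->
  exists q, q <> 0%Z /\ shiftn q x = x.
Proof.
move=> ne HX Horb x z p Hx Hz Hp Hper. apply: NNPP => H.
have Hper' : shiftn (Z.abs p) z = z.
  case: (Z.leb_spec 0 p) => Hp0; first by rewrite Z.abs_eq.
  rewrite Z.abs_neq; last lia. have := per_mul z p Hper (-1). by have -> : (-1 * p = - p)%Z by lia.
apply: (no_periodic_contra A B s X ne HX Horb x z (Z.abs p) Hx Hz ltac:(lia) Hper').
move=> q Hq E. apply: H. by exists q.
Qed.


Fixpoint win {T : Type} (x : Z -> T) (i0 : Z) (n : nat) : seq T :=
  match n with 0 => [::] | n'.+1 => x i0 :: win x (i0 + 1)%Z n' end.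

Lemma size_win {T : Type} (x : Z -> T) i0 n : size (win x i0 n) = n.
Proof. elim: n i0 => [|n IH] i0 //=. by rewrite IH. Qed.

Lemma nth_win {T : Type} (x : Z -> T) d i0 n q : (q < n)%N -> nth d (win x i0 n) q = x (i0 + Z.of_nat q)%Z.
Proof.
elim: n i0 q => [|n IH] i0 [|q] //= Hq; first by rewrite Z.add_0_r.
rewrite IH //. f_equal. lia.
Qed.

Lemma size_flat_nseq {T : Type} (v : seq T) m : size (flatten (nseq m v)) = (m * size v)%N.
Proof. elim: m => [|m IH] //=. by rewrite size_cat IH mulSn. Qed.

Lemma nth_flat_nseq {T : Type} (d : T) (v : seq T) m q : (q < m * size v)%N ->
  nth d (flatten (nseq m v)) q = nth d v (q %% size v).
Proof.
elim: m q => [|m IH] q /=; first by rewrite mul0n.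
move=> Hq. rewrite nth_cat. case: ifP => H.
- by rewrite modn_small.
- move/negbT: H. rewrite -leqNgt => H.
  rewrite IH; last by rewrite mulSn in Hq; lia.
  by rewrite -{2}(subnK H) modnDr.
Qed.

Lemma flat_map_nseq {A B : Type} (s : A -> seq B) (v : seq A) m :
  flatten (map s (flatten (nseq m v))) = flatten (nseq m (flatten (map s v))).
Proof. elim: m => [|m IH] //=. by rewrite map_cat flatten_cat IH. Qed.

Lemma f_nat {T : Type} (f : Z -> T) (c : Z) (u : seq T) d :
  (0 < size u)%N -> shiftn (Z.of_nat (size u)) f = f ->
  (forall q, (q < size u)%N -> f (c + 1 + Z.of_nat q)%Z = nth d u q) ->
  forall q : nat, f (c + 1 + Z.of_nat q)%Z = nth d u (q %% size u).
Proof.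
move=> Hu Hp Hw q. rewrite -Hw; last by rewrite ltn_mod.
have E := divn_eq q (size u). set a := (q %/ size u)%N in E. set b := (q %% size u)%N in E *.
have -> : (c + 1 + Z.of_nat q = (c + 1 + Z.of_nat b) + Z.of_nat a * Z.of_nat (size u))%Z.
  rewrite {1}E. lia.
apply: per_app. exact: per_mul.
Qed.

Lemma W1 {T : Type} (f : Z -> T) (c : Z) (u : seq T) (g : nat) d :
  (0 < size u)%N -> (0 < g)%N -> (g %| size u)%N -> shiftn (Z.of_nat g) f = f ->
  (forall q, (q < size u)%N -> f (c + 1 + Z.of_nat q)%Z = nth d u q) ->
  u = flatten (nseq (size u %/ g) (take g u)).
Proof.
move=> Hu Hg Hdv Hp Hw.
have Hgu : (g <= size u)%N by apply: dvdn_leq.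
have Hst : size (take g u) = g by rewrite size_take_min; apply/minn_idPl.
have Hw' : forall q, (q < size (take g u))%N -> f (c + 1 + Z.of_nat q)%Z = nth d (take g u) q.
  move=> q Hq. rewrite Hst in Hq. rewrite nth_take // Hw //. lia.
have Hf := f_nat f c (take g u) d ltac:(by rewrite Hst) ltac:(by rewrite Hst) Hw'.
apply: (eq_from_nth (x0 := d)).
- by rewrite size_flat_nseq Hst divnK.
- move=> q Hq. rewrite nth_flat_nseq; last by rewrite Hst divnK.
  by rewrite -Hf Hw.
Qed.

Lemma W2 {T : Type} (f : Z -> T) (c : Z) (u v : seq T) (m : nat) d :
  (0 < size u)%N -> shiftn (Z.of_nat (size u)) f = f ->
  (forall q, (q < size u)%N -> f (c + 1 + Z.of_nat q)%Z = nth d u q) ->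
  u = flatten (nseq m v) -> shiftn (Z.of_nat (size v)) f = f.
Proof.
move=> Hu Hp Hw Euv.
have Hsz : size u = (m * size v)%N by rewrite Euv size_flat_nseq.
have Hv : (0 < size v)%N by move: Hu; rewrite Hsz; case: (size v) => //; rewrite muln0.
have Hdv : (size v %| size u)%N by rewrite Hsz dvdn_mull.
have Hf := f_nat f c u d Hu Hp Hw.
have Key : forall q : nat, f (c + 1 + Z.of_nat q)%Z = nth d v (q %% size v).
  move=> q. rewrite Hf {1}Euv nth_flat_nseq; last by rewrite -Hsz ltn_mod.
  by rewrite -(modn_dvdm q Hdv).
apply: functional_extensionality => i. rewrite /shiftn.
set T0 := Z.to_nat (Z.abs (i - c - 1)).
set q := Z.to_nat (i - c - 1 + Z.of_nat T0 * Z.of_nat (size u)).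
have Hq : (i = c + 1 + Z.of_nat q + - Z.of_nat T0 * Z.of_nat (size u))%Z.
  rewrite /q. have : (Z.of_nat T0 <= Z.of_nat T0 * Z.of_nat (size u))%Z by nia. lia.
have Ei : f i = f (c + 1 + Z.of_nat q)%Z by rewrite {1}Hq per_app // per_mul.
have Ei' : f (i + Z.of_nat (size v))%Z = f (c + 1 + Z.of_nat (q + size v)%N)%Z.
  have -> : (i + Z.of_nat (size v) = c + 1 + Z.of_nat (q + size v)%N + - Z.of_nat T0 * Z.of_nat (size u))%Z.
    rewrite {1}Hq. lia.
  by rewrite per_app // per_mul.
by rewrite Ei Ei' !Key modnDr.
Qed.

Section SigFlat.
Variables (A B : Type) (s : A -> seq B).

Lemma sig_flat x z d : sigZ s x z -> forall n i0,
  Z.of_nat (size (flatten (map s (win x i0 n)))) = (cut (Ls s x) (i0 + Z.of_nat n - 1) - cut (Ls s x) (i0 - 1))%Z /\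
  forall q, (q < size (flatten (map s (win x i0 n))))%N ->
     z (cut (Ls s x) (i0 - 1) + 1 + Z.of_nat q)%Z = nth d (flatten (map s (win x i0 n))) q.
Proof.
move=> Hz. elim=> [|n IH] i0 /=.
- split=> //. rewrite Z.add_0_r. lia.
- have [IH1 IH2] := IH (i0 + 1)%Z.
  have Ec := cutS (Ls s x) i0. rewrite /Ls in Ec.
  have Ei0 : (i0 + 1 - 1 = i0)%Z by lia. rewrite Ei0 in IH1 IH2.
  split.
  + rewrite size_cat Nat2Z.inj_add IH1. have -> : (i0 + 1 + Z.of_nat n - 1 = i0 + Z.of_nat n.+1 - 1)%Z by lia.
    change (Z.pos (Pos.of_succ_nat n)) with (Z.of_nat n.+1). rewrite /Ls. lia.
  + move=> q Hq. rewrite nth_cat. case: ifP => H.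
    * rewrite (Hz i0 q H). exact: set_nth_default.
    * move/negbT: H. rewrite -leqNgt => H.
      rewrite -IH2; last by rewrite size_cat in Hq; lia.
      f_equal. rewrite /Ls. lia.
Qed.

End SigFlat.

Lemma perw_nth {T : Type} (a : T) w q : (q < (size w).+1)%N -> perw a w (Z.of_nat q) = nth a (a :: w) q.
Proof.
move=> Hq. rewrite /perw. rewrite Z.mod_small; last lia. by rewrite Nat2Z.id.
Qed.

Lemma perw_per {T : Type} (a : T) w : shiftn (Z.of_nat (size w).+1) (perw a w) = perw a w.
Proof.
apply: functional_extensionality => i. rewrite /shiftn /perw.
have -> : (i + Z.of_nat (size w).+1 = i + 1 * Z.of_nat (size w).+1)%Z by lia.
by rewrite Z.mod_add; last lia.
Qed.

Lemma perw_win {T : Type} (a : T) w : win (perw a w) 0 (size w).+1 = a :: w.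
Proof.
apply: (eq_from_nth (x0 := a)); first by rewrite size_win.
move=> q. rewrite size_win => Hq. by rewrite nth_win // perw_nth.
Qed.

Lemma periodic_perw {T : Type} (x : Z -> T) (N : nat) : (0 < N)%N -> shiftn (Z.of_nat N) x = x ->
  perw (x 0%Z) (win x 1 N.-1) = x.
Proof.
move=> HN Hp. apply: functional_extensionality => i. rewrite /perw size_win prednK //.
have [Hb1 Hb2] := Z.mod_pos_bound i (Z.of_nat N) ltac:(lia).
have Ed := Z.div_mod i (Z.of_nat N) ltac:(lia).
move: Hb1 Hb2 Ed. set r := (i mod Z.of_nat N)%Z. set t := (i / Z.of_nat N)%Z. move=> Hb1 Hb2 Ed.
have -> : x i = x r.
  rewrite {1}Ed. have -> : (Z.of_nat N * t + r = r + t * Z.of_nat N)%Z by lia.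
  by rewrite per_app // per_mul.
case E: (Z.to_nat r) => [|r'] /=.
- f_equal. lia.
- rewrite nth_win; last lia. f_equal. lia.
Qed.


Lemma divZ_nat (a b : Z) : (0 < a)%Z -> (0 < b)%Z -> (a | b)%Z -> (Z.to_nat a %| Z.to_nat b)%N.
Proof.
move=> Ha Hb [t Ht]. apply/dvdnP. exists (Z.to_nat t).
have Ht0 : (0 < t)%Z by nia.
rewrite Ht Z2Nat.inj_mul //; lia.
Qed.

Lemma div_ge2 (g P : nat) : (0 < g)%N -> (g < P)%N -> (g %| P)%N -> (2 <= P %/ g)%N.
Proof. move=> H1 H2 H3. have := divnK H3. set t := (P %/ g)%N. nia. Qed.

Lemma cut_per_mul (L : Z -> nat) (N : Z) : (forall n, cut L (n + N) = cut L n + cut L N)%Z ->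
  forall t n, (cut L (n + t * N) = cut L n + t * cut L N)%Z.
Proof.
move=> H.
have Hn : forall m : nat, forall n, (cut L (n + Z.of_nat m * N) = cut L n + Z.of_nat m * cut L N)%Z /\
                              (cut L (n - Z.of_nat m * N) = cut L n - Z.of_nat m * cut L N)%Z.
  elim=> [|m IH] n; first by rewrite /= !Z.add_0_r !Z.sub_0_r.
  have [IH1 IH2] := IH n. split.
  - have -> : (n + Z.of_nat m.+1 * N = (n + Z.of_nat m * N) + N)%Z by lia. rewrite H IH1. lia.
  - have E := H (n - Z.of_nat m.+1 * N)%Z.
    have E2 : (n - Z.of_nat m.+1 * N + N = n - Z.of_nat m * N)%Z by lia. rewrite E2 IH2 in E. lia.
move=> t n. case: (Z.leb_spec 0 t) => Ht.
- have -> : t = Z.of_nat (Z.to_nat t) by lia. exact: (Hn _ _).1.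
- have -> : t = (- Z.of_nat (Z.to_nat (-t)))%Z by lia.
  have := (Hn (Z.to_nat (-t)) n).2. have -> : (n + - Z.of_nat (Z.to_nat (- t)) * N = n - Z.of_nat (Z.to_nat (- t)) * N)%Z by lia.
  move=> ->. lia.
Qed.

Section General.
Variables (A : finType) (B : Type) (s : A -> seq B) (X : (Z -> A) -> Prop).
Hypothesis ne : nonerasing s.
Hypothesis HX : subshift X.

Lemma cut_per x N : shiftn N x = x -> forall n, (cut (Ls s x) (n + N) = cut (Ls s x) n + cut (Ls s x) N)%Z.
Proof. move=> H n. have := cutLs_shift s x N n. rewrite H. lia. Qed.

Lemma sig_per x z N : sigZ s x z -> shiftn N x = x -> shiftn (cut (Ls s x) N) z = z.
Proof. move=> Hz H. have := sig_shift N Hz. rewrite H => Hz'. exact: (sig_uniq ne Hz' Hz). Qed.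

Lemma rec_orb : recognizable s X -> orbit_injective s X.
Proof.
move=> Hr x x' z z' Hx Hx' Hz Hz'. split.
- move=> [j Ej].
  have [i [k [Hk Ej']]] := shift_decomp (Ls s x) (Ls_pos ne x) j.
  have Hs := sig_shift i Hz.
  have Hk1 : (k < size (s (shiftn i x 1%Z)))%N by rewrite /shiftn Z.add_comm.
  have Heq : shiftn (Z.of_nat k) (shiftn (cut (Ls s x) i) z) = shiftn (Z.of_nat 0) z'.
    by rewrite shiftn_add shiftn0 Ej Ej' Z.add_comm.
  have [E1 _] := Hr (shiftn i x) x' _ z' k 0%N (X_shiftn X HX x i Hx) Hx' Hs Hz' Hk1 (ne _) Heq.
  by exists i.
- move=> [j Ej]. exists (cut (Ls s x) j). rewrite Ej in Hz'.
  exact: (sig_uniq ne Hz' (sig_shift j Hz)).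
Qed.

Lemma rec_per : recognizable s X -> period_preserving s X.
Proof.
move=> Hr a w Hx. split.
- move=> [v [m [Hm E]]]. exists (flatten (map s v)), m. split=> //. by rewrite E flat_map_nseq.
- move=> [v [m [Hm E]]].
  set x := perw a w in Hx. set N := (size w).+1.
  have HxN : shiftn (Z.of_nat N) x = x by exact: perw_per.
  have [z Hz] := sig_ex ne x.
  have HzN := sig_per x z _ Hz HxN.
  have [S1 S2] := sig_flat A B s x z (z 0%Z) Hz N 0%Z.
  rewrite /x perw_win -/x in S1 S2.
  set u := flatten (map s (a :: w)) in S1 S2 E.
  have Ec := cut_per x _ HxN (-1)%Z.
  have HcN : (0 < cut (Ls s x) (Z.of_nat N))%Z by apply: cut_range; [exact: Ls_pos | lia].
  have Hsu : Z.of_nat (size u) = cut (Ls s x) (Z.of_nat N).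
    rewrite S1. have -> : (0 + Z.of_nat N - 1 = -1 + Z.of_nat N)%Z by lia. rewrite Ec. have -> : (0 - 1 = -1)%Z by []. lia.
  have Hu0 : (0 < size u)%N by lia.
  have Hzu : shiftn (Z.of_nat (size u)) z = z by rewrite Hsu.
  have Hsz : size u = (m * size v)%N by rewrite E size_flat_nseq.
  set d := z 0%Z.
  have Hw : forall q, (q < size u)%N -> z (cut (Ls s x) (-1) + 1 + Z.of_nat q)%Z = nth d u q.
    move=> q Hq. have := S2 q Hq. by have -> : (0 - 1 = -1)%Z by lia.
  have Hzv := W2 z (cut (Ls s x) (-1)) u v m d Hu0 Hzu Hw E.
  have Hv0 : (0 < size v)%N by move: Hu0; rewrite Hsz; case: (size v) => //; rewrite muln0.
  have Hvu : (size v < size u)%N by rewrite Hsz; nia.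
  have [i [k [Hk Ev]]] := shift_decomp (Ls s x) (Ls_pos ne x) (Z.of_nat (size v)).
  have Hs := sig_shift i Hz.
  have Hk1 : (k < size (s (shiftn i x 1%Z)))%N by rewrite /shiftn Z.add_comm.
  have Heq : shiftn (Z.of_nat k) (shiftn (cut (Ls s x) i) z) = shiftn (Z.of_nat 0) z.
    by rewrite shiftn_add shiftn0 Z.add_comm -Ev Hzv.
  have [E1 E2] := Hr (shiftn i x) x _ z k 0%N (X_shiftn X HX x i Hx) Hx Hs Hz Hk1 (ne _) Heq.
  subst k. rewrite Z.add_0_r in Ev.
  have Hi1 : (0 < i)%Z.
    have [Hi|Hi] := Z.lt_ge_cases 0 i; first done.
    have := cut_le (Ls s x) (Ls_pos ne x) i 0 ltac:(lia). rewrite cut0. lia.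
  have Hi2 : (i < Z.of_nat N)%Z.
    have [Hi|Hi] := Z.lt_ge_cases i (Z.of_nat N); first done.
    have := cut_le (Ls s x) (Ls_pos ne x) (Z.of_nat N) i ltac:(lia). lia.
  set g := Z.gcd i (Z.of_nat N).
  have Hg : shiftn g x = x by apply: per_gcd.
  have Hg0 : (0 < g)%Z.
    have := Z.gcd_nonneg i (Z.of_nat N). have : g <> 0%Z by move/Z.gcd_eq_0; lia. lia.
  have Hgi : (g <= i)%Z by apply: Z.divide_pos_le => //; exact: Z.gcd_divide_l.
  have Hdv : (Z.to_nat g %| N)%N.
    have := divZ_nat g (Z.of_nat N) Hg0 ltac:(lia) (Z.gcd_divide_r _ _). by rewrite Nat2Z.id.
  have Hwx : forall q, (q < size (a :: w))%N -> x (-1 + 1 + Z.of_nat q)%Z = nth a (a :: w) q.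
    move=> q Hq. rewrite /= in Hq. rewrite /x. have -> : (-1 + 1 + Z.of_nat q = Z.of_nat q)%Z by lia.
    exact: perw_nth.
  have EW := W1 x (-1) (a :: w) (Z.to_nat g) a erefl ltac:(lia) Hdv
     ltac:(by rewrite Z2Nat.id; [exact: Hg | lia]) Hwx.
  exists (take (Z.to_nat g) (a :: w)), (size (a :: w) %/ Z.to_nat g)%N. split=> //.
  apply: div_ge2 => //; [lia | rewrite /=; lia].
Qed.

End General.


Section General2.
Variables (A : finType) (B : Type) (s : A -> seq B) (X : (Z -> A) -> Prop).
Hypothesis ne : nonerasing s.
Hypothesis HX : subshift X.
Hypothesis Ho : orbit_injective s X.
Hypothesis Hpp : period_preserving s X.

Lemma period_mult_aux x z (d : Z) : X x -> sigZ s x z -> shiftn d z = z ->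
  forall n : nat, (0 < n)%N -> shiftn (Z.of_nat n) x = x ->
  exists q0 : nat, (0 < q0)%N /\ shiftn (Z.of_nat q0) x = x /\ (cut (Ls s x) (Z.of_nat q0) | d)%Z.
Proof.
move=> Hx Hz Hdz n.
elim: n {-2}n (leqnn n) => [|M IHM] n Hn Hn0 Hnx; first lia.
set a := x 0%Z. set w := win x 1 n.-1.
have Ew : a :: w = win x 0 n.
  have Hwc : forall m, (0 < m)%N -> win x 0 m = x 0%Z :: win x 1 m.-1 by case.
  by rewrite Hwc.
have Epw : perw a w = x by exact: periodic_perw.
have Hsw : size (a :: w) = n by rewrite Ew size_win.
have [S1 S2] := sig_flat A B s x z (z 0%Z) Hz n 0%Z.
rewrite -Ew in S1 S2.
set u := flatten (map s (a :: w)) in S1 S2.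
have Ec := cut_per A B s x _ Hnx (-1)%Z.
have HcN : (0 < cut (Ls s x) (Z.of_nat n))%Z by apply: cut_range; [exact: Ls_pos | lia].
have Hsu : Z.of_nat (size u) = cut (Ls s x) (Z.of_nat n).
  rewrite S1. have -> : (0 + Z.of_nat n - 1 = -1 + Z.of_nat n)%Z by lia. rewrite Ec.
  have -> : (0 - 1 = -1)%Z by []. lia.
have Hu0 : (0 < size u)%N by lia.
have HzP := sig_per A B s ne x z _ Hz Hnx.
set P := cut (Ls s x) (Z.of_nat n) in HcN Hsu HzP.
set g := Z.gcd d P.
have Hg : shiftn g z = z by apply: per_gcd.
have Hg0 : (0 < g)%Z.
  have := Z.gcd_nonneg d P. have : g <> 0%Z by move/Z.gcd_eq_0; lia. lia.
have HgP : (g <= P)%Z by apply: Z.divide_pos_le => //; exact: Z.gcd_divide_r.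
case: (Z.eq_dec g P) => EgP.
- exists n. split=> //. split=> //. rewrite -/P -EgP. exact: Z.gcd_divide_l.
- have HgP' : (g < P)%Z by lia.
  have Hdv : (Z.to_nat g %| size u)%N.
    have := divZ_nat g P Hg0 HcN (Z.gcd_divide_r _ _). by rewrite -Hsu Nat2Z.id.
  have Hw : forall q, (q < size u)%N -> z (cut (Ls s x) (-1) + 1 + Z.of_nat q)%Z = nth (z 0%Z) u q.
    move=> q Hq. have := S2 q Hq. by have -> : (0 - 1 = -1)%Z by [].
  have EW := W1 z (cut (Ls s x) (-1)) u (Z.to_nat g) (z 0%Z) Hu0 ltac:(lia) Hdv
     ltac:(by rewrite Z2Nat.id; [exact: Hg | lia]) Hw.
  have Hpu : proper_power u.
    exists (take (Z.to_nat g) u), (size u %/ Z.to_nat g)%N. split=> //.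
    apply: div_ge2 => //; lia.
  have Xpw : X (perw a w) by rewrite Epw.
  have [v [m [Hm Ev]]] := proj2 (Hpp a w Xpw) Hpu.
  have Hwx : forall q, (q < size (a :: w))%N -> x (-1 + 1 + Z.of_nat q)%Z = nth a (a :: w) q.
    move=> q Hq. rewrite Ew nth_win; last by rewrite -Hsw. by have -> : (-1 + 1 + Z.of_nat q = 0 + Z.of_nat q)%Z by lia.
  have Hxv := W2 x (-1) (a :: w) v m a erefl ltac:(by rewrite Hsw) Hwx Ev.
  have Hsz : size (a :: w) = (m * size v)%N by rewrite Ev size_flat_nseq.
  have Hv0 : (0 < size v)%N by move: Hsz; rewrite Hsw; case: (size v) => //; rewrite muln0; lia.
  apply: (IHM (size v)) => //. rewrite Hsw in Hsz. nia.
Qed.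

Lemma orb_per_rec : recognizable s X.
Proof.
move=> x x' z z' k l Hx Hx' Hz Hz' Hk Hl E.
have Ez' : z' = shiftn (- Z.of_nat l + Z.of_nat k) z.
  by rewrite -shiftn_add E shiftn_add Z.add_opp_diag_l shiftn0.
have [j Ej] : same_orbit x x'.
  apply/(Ho x x' z z' Hx Hx' Hz Hz'). by exists (- Z.of_nat l + Z.of_nat k)%Z.
have Hz'' : z' = shiftn (cut (Ls s x) j) z.
  rewrite Ej in Hz'. exact: (sig_uniq ne Hz' (sig_shift j Hz)).
have E2 : shiftn (Z.of_nat k) z = shiftn (Z.of_nat l + cut (Ls s x) j) z by rewrite E Hz'' shiftn_add.
have [j' [Ej' Ek]] : exists j', x' = shiftn j' x /\ (Z.of_nat k = Z.of_nat l + cut (Ls s x) j')%Z.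
  set dd := (Z.of_nat k - Z.of_nat l - cut (Ls s x) j)%Z.
  case: (Z.eq_dec dd 0) => Hdd.
  - exists j. split=> //. lia.
  - have Hdz : shiftn dd z = z.
      have := f_equal (shiftn (- (Z.of_nat l + cut (Ls s x) j))) E2.
      rewrite !shiftn_add Z.add_opp_diag_l shiftn0. rewrite /dd.
      by have -> : (- (Z.of_nat l + cut (Ls s x) j) + Z.of_nat k = Z.of_nat k - Z.of_nat l - cut (Ls s x) j)%Z by lia.
    have [q [Hq Hqx]] := periodicity A B s X ne HX Ho x z dd Hx Hz Hdd Hdz.
    have Hqx' : shiftn (Z.of_nat (Z.to_nat (Z.abs q))) x = x.
      case: (Z.leb_spec 0 q) => Hq0.
      - by have -> : Z.of_nat (Z.to_nat (Z.abs q)) = q by lia.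
      - have := per_mul x q Hqx (-1). by have -> : (-1 * q = Z.of_nat (Z.to_nat (Z.abs q)))%Z by lia.
    have [q0 [Hq0 [Hq0x [t Ht]]]] := period_mult_aux x z dd Hx Hz Hdz (Z.to_nat (Z.abs q)) ltac:(lia) Hqx'.
    exists (j + t * Z.of_nat q0)%Z. split.
    + by rewrite Ej -shiftn_add per_mul.
    + have := cut_per_mul (Ls s x) (Z.of_nat q0) (cut_per A B s x _ Hq0x) t j. lia.
rewrite Ej'. rewrite Ej' in Hl.
have Hj0 : j' = 0%Z.
  have HL1 := Ls_pos ne x 1%Z. have Hc1 := cutS (Ls s x) 1. rewrite cut0 /= in Hc1.
  case: (Z.lt_total j' 0) => [Hj|[Hj|Hj]] //.
  - have Hc := cutS (Ls s x) (j' + 1)%Z.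
    have Ej1 : (j' + 1 - 1 = j')%Z by lia. rewrite Ej1 in Hc.
    have := cut_le (Ls s x) (Ls_pos ne x) (j'+1) 0 ltac:(lia). rewrite cut0.
    move: Hl. rewrite /shiftn /Ls in Hc Ek *. have -> : (1 + j' = j' + 1)%Z by lia. lia.
  - have := cut_le (Ls s x) (Ls_pos ne x) 1 j' ltac:(lia). rewrite /Ls in Hc1 Ek HL1 *. lia.
subst j'. rewrite shiftn0. split=> //. rewrite cut0 in Ek. lia.
Qed.

End General2.


Section Pi.
Variables (A B : finType) (s : A -> seq B) (X : (Z -> A) -> Prop).
Hypothesis ne : nonerasing s.
Hypothesis HX : subshift X.

Lemma size_pi a : size (pi_sub s a) = size (s a).
Proof. by rewrite /pi_sub size_map size_enum_ord. Qed.

Lemma ne_pi : nonerasing (pi_sub s).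
Proof. move=> a. rewrite size_pi. exact: ne. Qed.

Lemma nth_pi a k d : (k < size (s a))%N ->
  projT1 (nth d (pi_sub s a) k) = a /\ nat_of_ord (projT2 (nth d (pi_sub s a) k)) = k /\
  forall b, alpha_letter (nth d (pi_sub s a) k) = nth b (s a) k.
Proof.
move=> Hk. rewrite /pi_sub (nth_map (Ordinal Hk)); last by rewrite size_enum_ord.
have E := nth_enum_ord (Ordinal Hk) Hk.
split=> //. split=> //= b. rewrite /alpha_letter /= (tnth_nth b) /=. by rewrite E.
Qed.

Lemma Lpi (x : Z -> A) : (fun j => size (pi_sub s (x j))) = (fun j => size (s (x j))).
Proof. apply: functional_extensionality => j. exact: size_pi. Qed.

Lemma sig_pi_alpha x y : sigZ (pi_sub s) x y -> sigZ s x (alphaZ y).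
Proof.
move=> H i k Hk. have Hk' : (k < size (pi_sub s (x i)))%N by rewrite size_pi.
have := H i k Hk'. rewrite Lpi /alphaZ => ->.
have [_ [_ E]] := nth_pi (x i) k (y 0%Z) Hk. exact: E.
Qed.

Lemma marker x x' y y' k l : sigZ (pi_sub s) x y -> sigZ (pi_sub s) x' y' ->
  (k < size (s (x 1%Z)))%N -> (l < size (s (x' 1%Z)))%N ->
  shiftn (Z.of_nat k) y = shiftn (Z.of_nat l) y' -> x = x' /\ k = l.
Proof.
move=> Hy Hy' Hk Hl E.
have Hat : forall x y k i, sigZ (pi_sub s) x y -> (k < size (s (x i)))%N ->
    projT1 (y (cut (Ls s x) (i - 1) + 1 + Z.of_nat k)%Z) = x i /\
    nat_of_ord (projT2 (y (cut (Ls s x) (i - 1) + 1 + Z.of_nat k)%Z)) = k.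
  move=> x0 y0 k0 i H Hk0. have Hk0' : (k0 < size (pi_sub s (x0 i)))%N by rewrite size_pi.
  have := H i k0 Hk0'. rewrite Lpi => ->. have [E1 [E2 _]] := nth_pi (x0 i) k0 (y0 0%Z) Hk0. by split.
have E1 := f_equal (fun f => f 1%Z) E. rewrite /shiftn /= in E1.
have [A1 A2] := Hat x y k 1%Z Hy Hk. have [A1' A2'] := Hat x' y' l 1%Z Hy' Hl.
rewrite (cut0 (Ls s x)) in A1 A2. rewrite (cut0 (Ls s x')) in A1' A2'.
have Ek : (0 + 1 + Z.of_nat k = 1 + Z.of_nat k)%Z by lia. rewrite Ek in A1 A2.
have El : (0 + 1 + Z.of_nat l = 1 + Z.of_nat l)%Z by lia. rewrite El in A1' A2'.
have Ekl : k = l by rewrite -A2 -A2' E1.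
subst l. split=> //.
have Eyy : y = y' by exact: (shiftn_inj _ _ _ E).
subst y'.
have Step : forall i, cut (Ls s x) (i - 1) = cut (Ls s x') (i - 1) -> x i = x' i.
  move=> i Hc. have [B1 _] := Hat x y 0%N i Hy (ne _). have [B1' _] := Hat x' y 0%N i Hy' (ne _).
  by rewrite -B1 -B1' Hc.
have StepD : forall i, cut (Ls s x) i = cut (Ls s x') i -> x i = x' i.
  move=> i Hc.
  have [B1 _] := Hat x y (size (s (x i))).-1 i Hy ltac:(rewrite prednK //; exact: ne).
  have [B1' _] := Hat x' y (size (s (x' i))).-1 i Hy' ltac:(rewrite prednK //; exact: ne).
  have C1 := cutS (Ls s x) i. have C2 := cutS (Ls s x') i.
  have P1 := ne (x i). have P2 := ne (x' i).
  rewrite -B1 -B1'. congr (projT1 (y _)). rewrite /Ls in C1 C2 Hc *. lia.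
have Hup : forall n : nat, cut (Ls s x) (Z.of_nat n) = cut (Ls s x') (Z.of_nat n).
  elim=> [|n IH]; first by rewrite !cut0.
  have Ex := Step (Z.of_nat n.+1). have Hn : (Z.of_nat n.+1 - 1 = Z.of_nat n)%Z by lia.
  rewrite Hn in Ex. have Exn := Ex IH.
  rewrite (cutS (Ls s x)) (cutS (Ls s x')) Hn IH /Ls Exn. done.
have Hdn : forall n : nat, cut (Ls s x) (- Z.of_nat n) = cut (Ls s x') (- Z.of_nat n).
  elim=> [|n IH]; first by rewrite /= !cut0.
  have Exn := StepD _ IH.
  have C1 := cutS (Ls s x) (- Z.of_nat n). have C2 := cutS (Ls s x') (- Z.of_nat n).
  have Hn : (- Z.of_nat n.+1 = - Z.of_nat n - 1)%Z by lia. rewrite Hn.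
  rewrite /Ls in C1 C2 IH *. rewrite Exn in C1. lia.
apply: functional_extensionality => i. apply: Step.
case: (Z.leb_spec 0 (i - 1)) => Hi.
- have -> : (i - 1 = Z.of_nat (Z.to_nat (i - 1)))%Z by lia. exact: Hup.
- have -> : (i - 1 = - Z.of_nat (Z.to_nat (- (i - 1))))%Z by lia. exact: Hdn.
Qed.

Lemma rec_inj : recognizable s X -> forall y y', imageZ (pi_sub s) X y -> imageZ (pi_sub s) X y' ->
  alphaZ y = alphaZ y' -> y = y'.
Proof.
move=> Hr y y' Hy Hy' E.
have [x [w [k [Hx [Hw [Hk Ey]]]]]] := image_canon A _ (pi_sub s) ne_pi X y HX Hy.
have [x' [w' [k' [Hx' [Hw' [Hk' Ey']]]]]] := image_canon A _ (pi_sub s) ne_pi X y' HX Hy'.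
subst y y'.
rewrite !size_pi in Hk Hk'.
have Ha : shiftn (Z.of_nat k) (alphaZ w) = shiftn (Z.of_nat k') (alphaZ w') by exact: E.
have [Exx Ekk] := Hr x x' _ _ k k' Hx Hx' (sig_pi_alpha x w Hw) (sig_pi_alpha x' w' Hw') Hk Hk' Ha.
subst x' k'. by rewrite (sig_uniq ne_pi Hw Hw').
Qed.

Lemma inj_rec : (forall y y', imageZ (pi_sub s) X y -> imageZ (pi_sub s) X y' ->
  alphaZ y = alphaZ y' -> y = y') -> recognizable s X.
Proof.
move=> Hi x x' z z' k l Hx Hx' Hz Hz' Hk Hl E.
have [w Hw] := sig_ex ne_pi x. have [w' Hw'] := sig_ex ne_pi x'.
have Ez := sig_uniq ne (sig_pi_alpha x w Hw) Hz.
have Ez' := sig_uniq ne (sig_pi_alpha x' w' Hw') Hz'.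
have Hyy : shiftn (Z.of_nat k) w = shiftn (Z.of_nat l) w'.
  apply: Hi.
  - exists x, w, (Z.of_nat k). by [].
  - exists x', w', (Z.of_nat l). by [].
  - change (shiftn (Z.of_nat k) (alphaZ w) = shiftn (Z.of_nat l) (alphaZ w')). by rewrite Ez Ez'.
exact: marker Hw Hw' Hk Hl Hyy.
Qed.

End Pi.


Lemma cut_one n : cut (fun _ => 1%N) n = n.
Proof.
apply: (rec_uniq (fun _ => 1%N) (cut (fun _ => 1%N)) (fun n => n)).
- by rewrite cut0.
- move=> m; exact: cutS.
- move=> m /=. lia.
Qed.

Section Alpha.
Variables (A B : finType) (s : A -> seq B).

Lemma ne_alpha : nonerasing (@alpha_morph A B s).
Proof. by []. Qed.

Lemma sig_alpha (y : Z -> subdiv_alph s) : sigZ (@alpha_morph A B s) y (alphaZ y).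
Proof.
move=> i k Hk. rewrite /= in Hk. have -> : k = 0%N by lia.
have E : (fun j => size (@alpha_morph A B s (y j))) = (fun _ => 1%N) by [].
rewrite E cut_one. have -> : (i - 1 + 1 + Z.of_nat 0 = i)%Z by lia. by [].
Qed.

Lemma arec_iff (P : (Z -> subdiv_alph s) -> Prop) :
  recognizable (@alpha_morph A B s) P <->
  (forall y y', P y -> P y' -> alphaZ y = alphaZ y' -> y = y').
Proof.
split.
- move=> Hr y y' Hy Hy' E.
  have [H _] := Hr y y' _ _ 0%N 0%N Hy Hy' (sig_alpha y) (sig_alpha y') erefl erefl
     ltac:(by rewrite E). exact: H.
- move=> Hi x x' z z' k l Hx Hx' Hz Hz' Hk Hl E.
  rewrite /= in Hk Hl. have Ek : k = 0%N by lia. have El : l = 0%N by lia. subst k l.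
  rewrite !shiftn0 in E. subst z'.
  have E1 := sig_uniq (ne_alpha) Hz (sig_alpha x).
  have E2 := sig_uniq (ne_alpha) Hz' (sig_alpha x').
  split=> //. apply: Hi => //. by rewrite -E1 -E2.
Qed.

End Alpha.

Section Iso.
Variables (A B : finType) (s : A -> seq B) (X : (Z -> A) -> Prop).
Hypothesis ne : nonerasing s.
Hypothesis HX : subshift X.

Lemma rec_iso : recognizable s X -> subshift_iso (imageZ (pi_sub s) X) (imageZ s X) (@alphaZ A B s).
Proof.
move=> Hr.
have Hinj := rec_inj A B s X ne HX Hr.
have HPX := image_subshift A _ (pi_sub s) X (ne_pi A B s ne) HX.
split; [|split; [|split; [|split; [|split]]]].
- move=> y [x [w [j [Hx [Hw ->]]]]]. exists x, (alphaZ w), j. split=> //. split=> //.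
  exact: sig_pi_alpha.
- exact: Hinj.
- move=> y [x [z [j [Hx [Hz ->]]]]].
  have [w Hw] := sig_ex (ne_pi A B s ne) x.
  exists (shiftn j w). split; first by exists x, w, j.
  have E := sig_uniq ne (sig_pi_alpha A B s x w Hw) Hz.
  by rewrite -E.
- by [].
- move=> x Hx n. exists n => x' Hx' Ha i Hi. by rewrite /alphaZ Ha.
- move=> y Hy n. apply: NNPP => Hn.
  have H1 : forall m : nat, exists y', imageZ (pi_sub s) X y' /\ agree m (alphaZ y) (alphaZ y') /\ ~ agree n y y'.
    move=> m. apply: NNPP => H2. apply: Hn. exists m => y' Hy' Ha. apply: NNPP => H3. apply: H2.
    by exists y'.
  pose F m := proj1_sig (constructive_indefinite_description _ (H1 m)).
  have HF : forall m, imageZ (pi_sub s) X (F m) /\ agree m (alphaZ y) (alphaZ (F m)) /\ ~ agree n y (F m).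
    move=> m. rewrite /F. by case: (constructive_indefinite_description _ (H1 m)).
  have [ys Hys] := cluster (subdiv_alph s) F (fun _ => True) (fun N => ex_intro _ N (conj (leqnn N) I)).
  have HPys : imageZ (pi_sub s) X ys.
    case: HPX => _ [Hc _]. apply: Hc => r. have [m [_ [_ Ha]]] := Hys r 0%N. exists (F m).
    split; [exact: (HF m).1 | exact: Ha].
  have Eys : ys = y.
    apply: Hinj => //. apply: agree_all => r.
    have [m [Hm [_ Ha]]] := Hys r r. have [_ [Hb _]] := HF m.
    move=> i Hi. rewrite /alphaZ -Ha //. symmetry. apply: Hb. lia.
  have [m [_ [_ Ha]]] := Hys n 0%N. have [_ [_ Hc]] := HF m. apply: Hc.
  rewrite -Eys. exact: agree_sym.
Qed.

End Iso.

Theorem proposition3p8 (A B : finType) (s : A -> seq B) (X : (Z -> A) -> Prop) :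
  nonerasing s -> subshift X ->
  (recognizable s X <-> subshift_iso (imageZ (pi_sub s) X) (imageZ s X) (@alphaZ A B s)) /\
  (recognizable s X <-> orbit_injective (@alpha_morph A B s) (imageZ (pi_sub s) X)
                        /\ period_preserving (@alpha_morph A B s) (imageZ (pi_sub s) X)) /\
  (recognizable s X <-> orbit_injective s X /\ period_preserving s X).
Proof.
move=> ne HX.
have HPX := image_subshift A _ (pi_sub s) X (ne_pi A B s ne) HX.
have Gen : forall (A' : finType) (B' : Type) (s' : A' -> seq B') (X' : (Z -> A') -> Prop),
    nonerasing s' -> subshift X' -> (recognizable s' X' <-> orbit_injective s' X' /\ period_preserving s' X').
  move=> A' B' s' X' ne' HX'. split.
  - move=> Hr. split; [exact: rec_orb | exact: rec_per].
  - move=> [Ho Hp]. exact: orb_per_rec.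
split; [|split].
- split; first exact: rec_iso.
  move=> [_ [Hi _]]. exact: (inj_rec A B s X ne Hi).
- rewrite -(Gen _ _ _ _ (ne_alpha A B s) HPX) arec_iff. split.
  + exact: rec_inj.
  + exact: inj_rec.
- exact: Gen.
Qed.
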